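(* For every $n\ge1$, the $\{\mathbf{3},\mathbf{2}+\mathbf{2}\}$-free naturally labelled posets on $[n]$ are in bijection with the labelled binary words of length $n$ satisfying all of the following: (1) the first letter is $\mathsf0$; (2) whenever two consecutive letters are both $\mathsf0$, their labels are decreasing; (3) whenever two consecutive letters are both $\mathsf1$, their labels are increasing; (4) the label of every $\mathsf1$ is greater than the labels of all $\mathsf0$s occurring earlier in the word.
   Context: A partial order $\preceq$ on $[n]$ is naturally labelled if $x\prec y$ implies $x<y$. It is $\mathbf{3}$-free if there are no $x\prec y\prec z$. It is $(\mathbf{2}+\mathbf{2})$-free if it has no induced subposet consisting of two disjoint $2$-element chains, i.e. no distinct $i\prec j$, $k\prec\ell$ with each of $i,j$ incomparable to each of $k,\ell$. A labelled binary word of length $n$ is a word $w_1\cdots w_n$ over $\{\mathsf0,\mathsf1\}$ together with a bijective assignment of labels from $[n]$ to its positions. *)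

(* Defs.v *)
From mathcomp Require Import all_boot all_fingroup.
Set Implicit Arguments. Unset Strict Implicit. Unset Printing Implicit Defensive.

(* The ground set [n] = {1,...,n} is represented by 'I_n = {0,...,n-1}
   (order-preserving shift by one). *)

Definition rle n (R : {set 'I_n * 'I_n}) (x y : 'I_n) : bool := (x, y) \in R.
Definition rlt n (R : {set 'I_n * 'I_n}) (x y : 'I_n) : bool := (x != y) && rle R x y.
Definition rcomparable n (R : {set 'I_n * 'I_n}) (x y : 'I_n) : bool :=
  rle R x y || rle R y x.

Definition is_partial_order n (R : {set 'I_n * 'I_n}) : Prop :=
  [/\ forall x, rle R x x,
      forall x y, rle R x y -> rle R y x -> x = y &
      forall x y z, rle R x y -> rle R y z -> rle R x z].

Definition naturally_labelled n (R : {set 'I_n * 'I_n}) : Prop :=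
  forall x y, rlt R x y -> (x < y)%N.

Definition three_free n (R : {set 'I_n * 'I_n}) : Prop :=
  ~ exists x y z, [/\ rlt R x y & rlt R y z].

Definition two_plus_two_free n (R : {set 'I_n * 'I_n}) : Prop :=
  ~ exists i j k l : 'I_n,
      [/\ uniq [:: i; j; k; l], rlt R i j, rlt R k l &
          [/\ ~~ rcomparable R i k, ~~ rcomparable R i l,
              ~~ rcomparable R j k & ~~ rcomparable R j l]].

Definition good_poset n (R : {set 'I_n * 'I_n}) : Prop :=
  [/\ is_partial_order R, naturally_labelled R, three_free R & two_plus_two_free R].

(* A labelled binary word of length n: letters w : positions -> bool
   (false = letter 0, true = letter 1) and a bijective labelling
   lab : positions -> labels, i.e. a permutation of 'I_n. *)
Definition labelled_word n := ({ffun 'I_n -> bool} * {perm 'I_n})%type.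

Definition good_word n (p : labelled_word n) : Prop :=
  let w := p.1 in let lab := p.2 in
  [/\
      forall i : 'I_n, val i = 0 -> w i = false,
      forall i j : 'I_n, val j = (val i).+1 -> w i = false -> w j = false ->
        (val (lab j) < val (lab i))%N,
      forall i j : 'I_n, val j = (val i).+1 -> w i = true -> w j = true ->
        (val (lab i) < val (lab j))%N &
      forall i j : 'I_n, (val i < val j)%N -> w i = false -> w j = true ->
        (val (lab i) < val (lab j))%N].

(* Main.v *)
Require Import Defs.
From mathcomp Require Import all_boot all_fingroup zify.
From Stdlib Require Import ProofIrrelevance.
Set Implicit Arguments. Unset Strict Implicit. Unset Printing Implicit Defensive.

Lemma Klt n c1 c2 r1 r2 : (r1 < n)%N -> (r2 < n)%N ->
  (c1*n + r1 < c2*n + r2)%N = (c1 < c2)%N || ((c1 == c2) && (r1 < r2)%N).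
Proof.
move=> h1 h2; case: (ltngtP c1 c2) => h /=.
- have : (c1.+1 * n <= c2 * n)%N by rewrite leq_mul2r h orbT.
  rewrite mulSn; lia.
- have : (c2.+1 * n <= c1 * n)%N by rewrite leq_mul2r h orbT.
  rewrite mulSn; lia.
- subst; lia.
Qed.

Section S.
Context (n : nat) (R : {set 'I_n * 'I_n}).

Definition Dn (y : 'I_n) := [set z | rlt R z y].
Definition Un (x : 'I_n) := [set y | rlt R x y].
Definition upb (x : 'I_n) := [exists z, rlt R z x].
Definition sv x := if upb x then #|[set y' | Dn x \subset Dn y']| else #|Un x|.
Definition cv x := ((n - sv x) * 2 + upb x)%N.
Definition rv (x : 'I_n) := if upb x then val x else (n.-1 - x)%N.
Definition Kv x := (cv x * n + rv x)%N.

Lemma rv_lt x : (rv x < n)%N.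
Proof. have h := ltn_ord x; rewrite /rv; case: ifP => _ //=; lia. Qed.

Lemma sv_le x : (sv x <= n)%N.
Proof.
rewrite /sv; case: ifP => _; apply: leq_trans (max_card _) _; rewrite card_ord //.
Qed.

Lemma KvE x y : (Kv x < Kv y)%N = (cv x < cv y)%N || ((cv x == cv y) && (rv x < rv y)%N).
Proof. exact: Klt (rv_lt x) (rv_lt y). Qed.

Lemma Kv_inj : injective Kv.
Proof.
move=> x y e.
have h1 : (~~ (Kv x < Kv y))%N by rewrite e ltnn.
have h2 : (~~ (Kv y < Kv x))%N by rewrite e ltnn.
rewrite KvE negb_or negb_and -leqNgt in h1.
rewrite KvE negb_or negb_and -leqNgt in h2.
have ec : cv x = cv y by lia.
have er : rv x = rv y.
  move: h1 h2; rewrite ec eqxx /= -!leqNgt; lia.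
have eu : upb x = upb y by move: ec; rewrite /cv; case: (upb x); case: (upb y); lia.
apply: val_inj; move: er; rewrite /rv eu; case: (upb y) => //; clear h1 h2 e ec eu.
have := ltn_ord x; have := ltn_ord y; move=> ? ? ?; suff : nat_of_ord x = nat_of_ord y by []; lia.
Qed.

Definition rk x := #|[set y | (Kv y < Kv x)%N]|.

Lemma rk_lt x : (rk x < n)%N.
Proof.
have : [set y | (Kv y < Kv x)%N] \subset [set~ x].
  by apply/subsetP => y; rewrite !inE; apply: contraTneq => ->; rewrite ltnn.
move/subset_leq_card; rewrite cardsC1 card_ord /rk.
have := ltn_ord x; lia.
Qed.

Lemma rk_mono x y : (Kv x < Kv y)%N -> (rk x < rk y)%N.
Proof.
move=> h; apply: proper_card; apply/properP; split.
  apply/subsetP => z; rewrite !inE => hz; exact: ltn_trans hz h.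
by exists x; rewrite !inE ?ltnn.
Qed.

Lemma rkE x y : (rk x < rk y)%N = (Kv x < Kv y)%N.
Proof.
apply/idP/idP; last exact: rk_mono.
case: (ltngtP (Kv x) (Kv y)) => // h.
  by move/rk_mono: h; lia.
by move/Kv_inj: h => ->; rewrite ltnn.
Qed.

Definition rko x : 'I_n := Ordinal (rk_lt x).
Lemma rko_inj : injective rko.
Proof.
move=> x y [] e.
case: (ltngtP (Kv x) (Kv y)) => h; last exact: Kv_inj.
  by rewrite -rkE e ltnn in h.
by rewrite -rkE e ltnn in h.
Qed.

Definition pos := perm rko_inj.
Definition psi : labelled_word n := ([ffun i => upb (pos^-1 i)], pos^-1)%g.

End S.


Section G.
Context (n : nat) (R : {set 'I_n * 'I_n}) (gR : good_poset R).

Lemma lt_low x y : rlt R x y -> ~~ upb R x.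
Proof.
case: gR => _ _ th _ h; apply/existsP => [[z hz]]; apply: th; by exists z, x, y.
Qed.
Lemma lt_up x y : rlt R x y -> upb R y.
Proof. by move=> h; apply/existsP; exists x. Qed.
Lemma neq_lu x y : ~~ upb R x -> upb R y -> x != y.
Proof. by move=> h1 h2; apply: contraNneq h1 => ->. Qed.
Lemma rltne x y : rlt R x y -> x != y.
Proof. by case/andP. Qed.
Lemma ncomp x y : x != y -> ~~ rlt R x y -> ~~ rlt R y x -> ~~ rcomparable R x y.
Proof.
rewrite /rlt /rcomparable => h; rewrite h eq_sym h /= => h1 h2.
by rewrite negb_or h1 h2.
Qed.

Lemma card_le (A : {set 'I_n}) : (#|A| <= n)%N.
Proof. by rewrite -[n in (_ <= n)%N]card_ord max_card. Qed.

Lemma nlt_low a b : ~~ upb R b -> ~~ rlt R a b.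
Proof. by move=> h; apply/negP => /lt_up; apply/negP. Qed.
Lemma nlt_up a b : upb R a -> ~~ rlt R a b.
Proof. by move=> h; apply/negP => /lt_low; rewrite h. Qed.

Lemma nested x y z y' : ~~ upb R x -> upb R y -> ~~ rlt R x y -> rlt R z y ->
  rlt R x y' -> rlt R z y'.
Proof.
move=> hx hy nxy zy xy'.
case h: (rlt R z y') => //; exfalso.
have zl := lt_low zy; have y'u := lt_up xy'.
have ezy := rltne zy; have exy' := rltne xy'.
have ezx : z != x by apply: contraNneq nxy => <-.
have ezy' := neq_lu zl y'u.
have eyx : y != x by rewrite eq_sym; exact: neq_lu hx hy.
have eyy' : y != y' by apply: contraNneq nxy => ->.
case: gR => _ _ _ tpt; apply: tpt; exists z, y, x, y'; split => //.
- by rewrite /= !inE !negb_or ezy ezx ezy' eyx eyy' exy'.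
- split.
  + by apply: ncomp => //; apply: nlt_low.
  + by apply: ncomp => //; [rewrite h | apply: nlt_low].
  + by apply: ncomp => //; try apply: nlt_low.
  + by apply: ncomp => //; apply: nlt_up.
Qed.

Definition Sy y := [set y' | Dn R y \subset Dn R y'].

Lemma key x y : ~~ upb R x -> upb R y -> rlt R x y = (Kv R x < Kv R y)%N.
Proof.
move=> hx hy; rewrite KvE /cv /sv (negbTE hx) hy /= -/(Sy y).
have b1 : (#|Un R x| <= n)%N := card_le _; have b2 : (#|Sy y| <= n)%N := card_le _.
case h: (rlt R x y).
- have : Sy y \subset Un R x.
    apply/subsetP => yy; rewrite !inE => /subsetP s; by have := s x; rewrite !inE h; apply.
  move/subset_leq_card=> hc; apply/esym/orP; left; move: hc b1 b2; clear; move: #|Sy y| #|Un R x| => a b; lia.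
- have : Un R x \proper Sy y.
    apply/properP; split.
      apply/subsetP => y'; rewrite !inE => xy'; apply/subsetP => z.
      rewrite !inE => zy; apply: nested hx hy _ zy xy'; by rewrite h.
    by exists y; rewrite !inE ?subxx ?h.
  move/proper_card => hc; apply/esym/negbTE; move: hc b1 b2; clear; move: #|Sy y| #|Un R x| => a b; lia.
Qed.

Lemma Kv_ltNge a b : ~~ (Kv R a < Kv R b)%N -> a != b -> (Kv R b < Kv R a)%N.
Proof.
move=> h e; case: (ltngtP (Kv R a) (Kv R b)) h => // h _.
by move/Kv_inj: h => h; rewrite h eqxx in e.
Qed.

Notation lab := ((pos R)^-1)%g.
Lemma posE x y : (pos R x < pos R y)%N = (Kv R x < Kv R y)%N.
Proof. by rewrite !permE /= rkE. Qed.
Lemma poslab i : pos R (lab i) = i.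
Proof. by rewrite permKV. Qed.

Lemma between (i j : 'I_n) x : val j = (val i).+1 ->
  (Kv R (lab i) < Kv R x)%N -> (Kv R x < Kv R (lab j))%N -> False.
Proof.
rewrite -!posE !poslab => e h1 h2; have e' : nat_of_ord j = (nat_of_ord i).+1 := e; lia.
Qed.

Lemma psi_good : good_word (psi R).
Proof.
rewrite /psi; split => /=.
- move=> i i0; rewrite ffunE; apply/negbTE/negP => /existsP [z hz].
  have zl := lt_low hz.
  move: (hz); rewrite key //; last by apply/existsP; exists z.
  by rewrite -posE poslab i0.
- move=> i j e; rewrite !ffunE => /negbT hx /negbT hx'.
  have hK : (Kv R (lab i) < Kv R (lab j))%N by rewrite -posE !poslab e.
  move: hK; rewrite KvE /cv /sv /= (negbTE hx) (negbTE hx').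
  have b1 := card_le (Un R (lab i)); have b2 := card_le (Un R (lab j)).
  case: (ltnP #|Un R (lab j)| #|Un R (lab i)|) => hc.
    have : ~~ (Un R (lab i) \subset Un R (lab j)).
      by apply: contraTN hc => /subset_leq_card; rewrite -leqNgt.
    case/subsetPn => y; rewrite !inE => h1 h2.
    have yu := lt_up h1.
    exfalso; apply: (between e (x := y)); first by rewrite -key.
    exfalso; apply: (between e (x := y)); first by rewrite -key.
    apply: Kv_ltNge; first by rewrite -key.
    by apply: neq_lu.
  rewrite /rv (negbTE hx) (negbTE hx') /= => h.
  move: h hc b1 b2 (ltn_ord (lab i)) (ltn_ord (lab j)).
  move: #|Un R (lab i)| #|Un R (lab j)| (nat_of_ord (lab i)) (nat_of_ord (lab j)) => a b u v; lia.
- move=> i j e; rewrite !ffunE => hy hy'.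
  have hK : (Kv R (lab i) < Kv R (lab j))%N by rewrite -posE !poslab e.
  move: hK; rewrite KvE /cv /sv /= hy hy'.
  have b1 := card_le (Sy (lab i)); have b2 := card_le (Sy (lab j)).
  case: (ltnP #|Sy (lab j)| #|Sy (lab i)|) => hc.
    have : ~~ (Sy (lab i) \subset Sy (lab j)).
      by apply: contraTN hc => /subset_leq_card; rewrite -leqNgt.
    case/subsetPn => y''; rewrite !inE => h1 h2.
    case/subsetPn: h2 => x; rewrite inE => xj xn.
    have xi : ~~ rlt R x (lab i).
      by apply: contraNN xn => h; apply: (subsetP h1); rewrite inE.
    have xl := lt_low xj.
    exfalso; apply: (between e (x := x)); last by rewrite -key.
    apply: Kv_ltNge; first by rewrite -key.
    by apply: neq_lu.
  rewrite /rv hy hy' /= => h.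
  move: h hc b1 b2.
  move: #|Sy (lab i)| #|Sy (lab j)| (nat_of_ord (lab i)) (nat_of_ord (lab j)) => a b u v; lia.
- move=> i j ij; rewrite !ffunE => /negbT hx hy.
  have : rlt R (lab i) (lab j) by rewrite key // -posE !poslab.
  by case: gR => _ nl _ _ /nl.
Qed.

End G.


Lemma card_lt (n k : nat) : (k <= n)%N -> #|[set i : 'I_n | (i < k)%N]| = k.
Proof.
move=> h; rewrite -sum1_card (eq_bigl (fun i : 'I_n => (i < k)%N)); last by move=> i; rewrite inE.
by rewrite (big_ord_narrow h) sum1_card card_ord.
Qed.

Definition phi n (p : labelled_word n) : {set 'I_n * 'I_n} :=
  [set xy | (xy.1 == xy.2) || [&& ~~ p.1 (p.2^-1 xy.1)%g, p.1 (p.2^-1 xy.2)%g &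
            (p.2^-1 xy.1 < p.2^-1 xy.2)%g%N]].

Lemma phipsi n (R : {set 'I_n * 'I_n}) : good_poset R -> phi (psi R) = R.
Proof.
move=> gR; apply/setP => -[x y]; rewrite inE /psi /= invgK !ffunE !permK.
case: eqP => [<-|/eqP ne] /=.
  by case: gR => [[r _ _] _ _ _]; symmetry; apply: r.
have -> : ((x, y) \in R) = rlt R x y by rewrite /rlt ne.
rewrite posE //.
case hx: (upb R x); case hy: (upb R y) => /=.
- by apply/esym/negbTE; apply: nlt_up.
- by apply/esym/negbTE; apply: nlt_up.
- by rewrite key // hx.
- by apply/esym/negbTE; apply: nlt_low => //; rewrite hy.
Qed.


Section W.
Context (n : nat) (w : {ffun 'I_n -> bool}) (lab : {perm 'I_n}).
Hypothesis gw : good_word (w, lab).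
Notation ps := (lab^-1)%g.
Notation R := (phi (w, lab)).

Lemma rleE x y : rle R x y = (x == y) || [&& ~~ w (ps x), w (ps y) & (ps x < ps y)%N].
Proof. by rewrite /rle inE. Qed.
Lemma rltE x y : rlt R x y = [&& ~~ w (ps x), w (ps y) & (ps x < ps y)%N].
Proof.
rewrite /rlt rleE; case: eqP => [->|] /=; first by rewrite ltnn !andbF.
by [].
Qed.

Lemma phi_good : good_poset R.
Proof.
case: gw => g1 g2 g3 g4.
split.
- split.
  + by move=> x; rewrite rleE eqxx.
  + move=> x y; rewrite !rleE => /orP[/eqP -> //|/and3P [_ _ a]].
    move=> /orP[/eqP -> //|/and3P [_ _ b]].
    by have := ltn_trans a b; rewrite ltnn.
  + move=> x y z; rewrite !rleE => /orP[/eqP -> //|h1] /orP[/eqP e|h2].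
      by rewrite -e h1 orbT.
    move/and3P: h1 => [_ a _]; move/and3P: h2 => [b _ _]; by rewrite a in b.
- move=> x y; rewrite rltE => /and3P [a b c].
  by have := g4 _ _ c (negbTE a) b; rewrite !permKV.
- move=> [x [y [z [h1 h2]]]]; move: h1 h2; rewrite !rltE.
  by case/and3P => _ -> _; case/and3P => /negP.
- move=> [i [j [k [l [u h1 h2 [c1 c2 c3 c4]]]]]].
  move: h1 h2; rewrite !rltE => /and3P [a1 b1 d1] /and3P [a2 b2 d2].
  case: (ltngtP (ps i) (ps k)) => h.
  + by move: c2; rewrite /rcomparable rleE a1 b2 (ltn_trans h d2) !orbT.
  + by move: c3; rewrite /rcomparable (rleE k j) a2 b1 (ltn_trans h d1) !orbT.
  + have e : i = k by apply: (@perm_inj _ ps); apply: val_inj.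
    by move: c1; rewrite e /rcomparable rleE eqxx.
Qed.

Lemma run0 d (i j : 'I_n) : nat_of_ord j = (nat_of_ord i + d.+1)%N -> w i = false -> w j = false ->
  (val (lab j) < val (lab i))%N \/ exists k : 'I_n, [/\ (i < k)%N, (k < j)%N & w k].
Proof.
case: gw => g1 g2 g3 g4.
elim: d j => [|d IH] j e wi wj.
  by left; apply: g2 => //=; rewrite e addn1.
have hj' : (nat_of_ord i + d.+1 < n)%N by have := ltn_ord j; rewrite e; lia.
pose j' : 'I_n := Ordinal hj'.
case hw: (w j').
  by right; exists j'; split => //=; rewrite ?e; lia.
case: (IH j' erefl wi hw) => [h|[k [k1 k2 k3]]].
  left; apply: ltn_trans h; apply: g2 => //=; rewrite e; lia.
right; exists k; split => //; apply: ltn_trans k2 _; rewrite /= e; lia.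
Qed.

Lemma run1 d (i j : 'I_n) : nat_of_ord j = (nat_of_ord i + d.+1)%N -> w i = true -> w j = true ->
  (val (lab i) < val (lab j))%N \/ exists k : 'I_n, [/\ (i < k)%N, (k < j)%N & w k = false].
Proof.
case: gw => g1 g2 g3 g4.
elim: d j => [|d IH] j e wi wj.
  by left; apply: g3 => //=; rewrite e addn1.
have hj' : (nat_of_ord i + d.+1 < n)%N by have := ltn_ord j; rewrite e; lia.
pose j' : 'I_n := Ordinal hj'.
case hw: (w j'); last first.
  by right; exists j'; split => //=; rewrite ?e; lia.
case: (IH j' erefl wi hw) => [h|[k [k1 k2 k3]]].
  left; apply: ltn_trans h _; apply: g3 => //=; rewrite e; lia.
right; exists k; split => //; apply: ltn_trans k2 _; rewrite /= e; lia.
Qed.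

End W.


Section W2.
Context (n : nat) (w : {ffun 'I_n -> bool}) (lab : {perm 'I_n}).
Hypothesis gw : good_word (w, lab).
Notation ps := (lab^-1)%g.
Notation R := (phi (w, lab)).
Let gR := phi_good gw.

Lemma upbE x : upb R x = w (ps x).
Proof.
case: gw => g1 g2 g3 g4.
apply/existsP/idP => [[z]|h]; first by rewrite rltE => /and3P [].
have n0 : (0 < n)%N by have := ltn_ord x; lia.
pose i0 : 'I_n := Ordinal n0.
exists (lab i0); rewrite rltE permK h (g1 i0 erefl) /=.
case: (posnP (ps x)) => // e.
have : w (ps x) = false by apply: g1.
by rewrite h.
Qed.

Lemma mono x y : (ps x < ps y)%N -> (Kv R x < Kv R y)%N.
Proof.
move=> h.
have hd : nat_of_ord (ps y) = (nat_of_ord (ps x) + (ps y - ps x - 1).+1)%N by lia.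
have ne : x != y by apply: contraTneq h => ->; rewrite ltnn.
case hx: (w (ps x)); case hy: (w (ps y)).
- have Dxy : Dn R x \subset Dn R y.
    apply/subsetP => z; rewrite !inE !rltE => /and3P [a b c].
    by rewrite a hy (ltn_trans c h).
  have sub : Sy R y \subset Sy R x.
    apply/subsetP => z; rewrite !inE => hz; exact: subset_trans Dxy hz.
  have c1 := subset_leq_card sub.
  have c2 : (#|Sy R y| < #|Sy R x|)%N \/ (x < y)%N.
    case: (run1 gw hd hx hy) => [|[k [k1 k2 k3]]]; first by rewrite !permKV; right.
    left; apply: proper_card; apply/properP; split => //.
    exists x; rewrite !inE ?subxx //.
    apply/subsetPn; exists (lab k); rewrite !inE !rltE permK k3 /=; first by rewrite hy k2.
    by rewrite hx ltnNge (ltnW k1).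
  rewrite KvE /cv /sv /rv !upbE hx hy /= -/(Sy R x) -/(Sy R y).
  have b1 := card_le (Sy R x); have b2 := card_le (Sy R y).
  move: c1 c2 b1 b2; move: #|Sy R x| #|Sy R y| (nat_of_ord x) (nat_of_ord y) => a b u v.
  lia.
- apply: (@Kv_ltNge _ R y x); last by rewrite eq_sym.
  rewrite -(key gR (x:=y) (y:=x)); first by rewrite rltE hy hx /= -leqNgt ltnW.
    by rewrite upbE hy.
  by rewrite upbE hx.
- rewrite -(key gR (x:=x) (y:=y)) ?upbE ?hx ?hy //; by rewrite rltE hx hy h.
- have sub : Un R y \subset Un R x.
    apply/subsetP => z; rewrite !inE !rltE => /and3P [a b c].
    by rewrite hx b (ltn_trans h c).
  have c1 := subset_leq_card sub.
  have c2 : (#|Un R y| < #|Un R x|)%N \/ (y < x)%N.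
    case: (run0 gw hd hx hy) => [|[k [k1 k2 k3]]]; first by rewrite !permKV; right.
    left; apply: proper_card; apply/properP; split => //.
    exists (lab k); rewrite !inE !rltE permK k3 /=; first by rewrite hx k1.
    by rewrite hy /= -leqNgt ltnW.
  have b1 := card_le (Un R x); have b2 := card_le (Un R y).
  have lx := ltn_ord x; have ly := ltn_ord y.
  rewrite KvE /cv /sv /rv !upbE hx hy /=.
  move: c1 c2 b1 b2 lx ly; move: #|Un R x| #|Un R y| (nat_of_ord x) (nat_of_ord y) => a b u v.
  lia.
Qed.

Lemma rk_eq x : rk R x = ps x.
Proof.
rewrite /rk; have -> : [set y | (Kv R y < Kv R x)%N] = ps @^-1: [set i : 'I_n | (i < ps x)%N].
  apply/setP => y; rewrite !inE; apply/idP/idP; last exact: mono.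
  move=> h; case: (ltngtP (ps y) (ps x)) => // c.
    by have := mono c; rewrite ltnNge (ltnW h).
  have e : y = x by apply: (@perm_inj _ ps); apply: val_inj.
  by rewrite e ltnn in h.
by rewrite card_preimset ?card_lt //; [exact: ltnW | exact: perm_inj].
Qed.

Lemma posR : pos R = ps.
Proof. by apply/permP => x; rewrite permE; apply: val_inj; rewrite /= rk_eq. Qed.

Lemma psiphi : psi R = (w, lab).
Proof.
rewrite /psi posR invgK; congr pair; apply/ffunP => i.
by rewrite ffunE upbE permK.
Qed.

End W2.


Lemma phi_good' n (p : labelled_word n) : good_word p -> good_poset (phi p).
Proof. by case: p => w lab; apply: phi_good. Qed.
Lemma psiphi' n (p : labelled_word n) : good_word p -> psi (phi p) = p.
Proof. by case: p => w lab; apply: psiphi. Qed.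

Theorem proposition7 (n : nat) (hn : (1 <= n)%N) :
  exists f : {R : {set 'I_n * 'I_n} | good_poset R} ->
             {p : labelled_word n | good_word p},
    bijective f.
Proof.
exists (fun RR => exist _ (psi (sval RR)) (psi_good (proj2_sig RR))).
exists (fun pp => exist _ (phi (sval pp)) (phi_good' (proj2_sig pp))).
- move=> [R hR]; apply: eq_sig_hprop; first by move=> *; apply: proof_irrelevance.
  exact: phipsi.
- move=> [p hp]; apply: eq_sig_hprop; first by move=> *; apply: proof_irrelevance.
  exact: psiphi'.
Qed.
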